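(* Let $\mathcal M=(V,E,c_V,L,\Theta)$ be a molecular graph with $V=\{v_1,\dots,v_n\}$, and suppose there exists $(v,w_1,w_2)\in E_2$ with $\Theta(v,w_1,w_2)\neq\pi$. Let $SO(3)$ act on $\mathcal C^P_{\mathcal M}$ by $A\cdot\varphi=A\circ\varphi$, let $\mathcal C^{int}_{\mathcal M}=\mathcal C^P_{\mathcal M}/SO(3)$ carry the quotient topology, and let $q:\mathcal C^P_{\mathcal M}\to\mathcal C^{int}_{\mathcal M}$ be the quotient map. Then $q$ is a principal $SO(3)$-bundle, and this bundle is trivial: there is an $SO(3)$-equivariant homeomorphism $\mathcal C^P_{\mathcal M}\cong \mathcal C^{int}_{\mathcal M}\times SO(3)$ commuting with the projections to $\mathcal C^{int}_{\mathcal M}$ (equivalently, $q$ admits a continuous section).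
   Context: A molecular graph is a tuple $\mathcal M=(V,E,c_V,L,\Theta)$ where: $V$ is a finite set; $E\subseteq V\times V$ satisfies $(v,v)\notin E$ and $(v,w)\in E\iff (w,v)\in E$; $c_V:V\to\mathbb N$ (the atomic number of the atom at each vertex); $L:E\to(0,\infty)$ with $L(v,w)=L(w,v)$; and $\Theta:E_2\to(0,\pi]$ with $\Theta(v,w_1,w_2)=\Theta(v,w_2,w_1)$, where $E_2=\{(v,w_1,w_2)\in V^3: (v,w_1),(v,w_2)\in E,\ w_1\neq w_2\}$. The geometric realisation of $\mathcal M$ is the metric graph obtained by gluing a segment $[0,L(e)]$ for each edge $e$ along the vertices. A configuration of $\mathcal M$ is an injective continuous map $\varphi$ from the geometric realisation into $\mathbb R^3$ such that (i) the restriction of $\varphi$ to each edge is an isometric embedding, and (ii) for each $(v,w_1,w_2)\in E_2$ the angle at $\varphi(v)$ between the segments to $\varphi(w_1)$ and $\varphi(w_2)$ equals $\Theta(v,w_1,w_2)$. A configuration is identified with $(\varphi(v_1),\dots,\varphi(v_n))\in\mathbb R^{3n}$. Define $\mathcal C^P_{\mathcal M}$ as the set of configurations satisfying $\sum_{i=1}^n c_V(v_i)\varphi(v_i)=0$, with the subspace topology from $\mathbb R^{3n}$. A principal $SO(3)$-bundle here means: $SO(3)$ acts continuously on the total space, the base is the orbit space with the quotient map as projection, the map $(x,g)\mapsto(x,g\cdot x)$ is a homeomorphism onto its image, and the projection is locally trivial by $SO(3)$-equivariant trivialisations. *)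

(* Defs.v *)
From Stdlib Require Import Reals Lra Lia Arith.
Open Scope R_scope.

Definition Opens (X : Type) := (X -> Prop) -> Prop.

Definition continuous {X Y : Type} (OX : Opens X) (OY : Opens Y) (f : X -> Y) : Prop :=
  forall V, OY V -> OX (fun x => V (f x)).

Definition homeomorphism {X Y : Type} (OX : Opens X) (OY : Opens Y) (f : X -> Y) : Prop :=
  exists g : Y -> X,
    (forall x, g (f x) = x) /\ (forall y, f (g y) = y) /\
    continuous OX OY f /\ continuous OY OX g.

Definition sub_open {X : Type} (OX : Opens X) (P : X -> Prop) : Opens {x : X | P x} :=
  fun V => exists U, OX U /\ forall s : {x : X | P x}, V s <-> U (proj1_sig s).

Definition prod_open {X Y : Type} (OX : Opens X) (OY : Opens Y) : Opens (X * Y) :=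
  fun W => forall p, W p ->
    exists U V, OX U /\ OY V /\ U (fst p) /\ V (snd p) /\
      forall a b, U a -> V b -> W (a, b).

Definition quot_open {X Y : Type} (OX : Opens X) (q : X -> Y) : Opens Y :=
  fun O => OX (fun x => O (q x)).

Definition image_of {X Y : Type} (f : X -> Y) : Y -> Prop := fun y => exists x, y = f x.
Definition corestr {X Y : Type} (f : X -> Y) (x : X) : {y : Y | image_of f y} :=
  exist _ (f x) (ex_intro _ x eq_refl).
Definition homeo_onto_image {X Y : Type} (OX : Opens X) (OY : Opens Y) (f : X -> Y) : Prop :=
  homeomorphism OX (sub_open OY (image_of f)) (corestr f).

Definition R3 : Type := (R * R * R)%type.
Definition zero3 : R3 := (0, 0, 0).
Definition add3 (a b : R3) : R3 :=
  match a, b with (a1, a2, a3), (b1, b2, b3) => (a1 + b1, a2 + b2, a3 + b3) end.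
Definition scal3 (k : R) (a : R3) : R3 :=
  match a with (a1, a2, a3) => (k * a1, k * a2, k * a3) end.
Definition sub3 (a b : R3) : R3 := add3 a (scal3 (-1) b).
Definition dot3 (a b : R3) : R :=
  match a, b with (a1, a2, a3), (b1, b2, b3) => a1 * b1 + a2 * b2 + a3 * b3 end.
Definition cross3 (a b : R3) : R3 :=
  match a, b with (a1, a2, a3), (b1, b2, b3) =>
    (a2 * b3 - a3 * b2, a3 * b1 - a1 * b3, a1 * b2 - a2 * b1) end.
Definition norm3 (a : R3) : R := sqrt (dot3 a a).
Definition dist3 (a b : R3) : R := norm3 (sub3 a b).

Definition angle3 (a b c : R3) : R :=
  acos (dot3 (sub3 b a) (sub3 c a) / (norm3 (sub3 b a) * norm3 (sub3 c a))).

(* a 3x3 real matrix, given by its three rows *)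
Definition Mat3 : Type := (R3 * R3 * R3)%type.
Definition mat_vec (A : Mat3) (v : R3) : R3 :=
  match A with (r1, r2, r3) => (dot3 r1 v, dot3 r2 v, dot3 r3 v) end.
(* row i of A*B = sum_k A_ik (row k of B) *)
Definition mat_mul (A B : Mat3) : Mat3 :=
  match B with (b1, b2, b3) =>
    let row := fun a : R3 => match a with (x, y, z) =>
                 add3 (add3 (scal3 x b1) (scal3 y b2)) (scal3 z b3) end in
    match A with (a1, a2, a3) => (row a1, row a2, row a3) end end.
Definition det3 (A : Mat3) : R :=
  match A with (r1, r2, r3) => dot3 r1 (cross3 r2 r3) end.
(* A A^T = I, i.e. the rows are orthonormal *)
Definition orthogonal3 (A : Mat3) : Prop :=
  match A with (r1, r2, r3) =>
    dot3 r1 r1 = 1 /\ dot3 r2 r2 = 1 /\ dot3 r3 r3 = 1 /\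
    dot3 r1 r2 = 0 /\ dot3 r1 r3 = 0 /\ dot3 r2 r3 = 0 end.
Definition is_SO3 (A : Mat3) : Prop := orthogonal3 A /\ det3 A = 1.
Definition SO3 : Type := {A : Mat3 | is_SO3 A}.

Definition mdist (A B : Mat3) : R :=
  match A, B with (a1, a2, a3), (b1, b2, b3) =>
    sqrt (dot3 (sub3 a1 b1) (sub3 a1 b1) + dot3 (sub3 a2 b2) (sub3 a2 b2)
          + dot3 (sub3 a3 b3) (sub3 a3 b3)) end.
Definition mat_open : Opens Mat3 :=
  fun U => forall A, U A -> exists eps, eps > 0 /\ forall B, mdist A B < eps -> U B.
Definition SO3_open : Opens SO3 := sub_open mat_open is_SO3.

(* the vertex set V = {v_1,...,v_n}, indexed by {0,...,n-1} *)
Definition Idx (n : nat) : Type := {i : nat | (i < n)%nat}.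

(* a point of R^{3n} = (R^3)^n *)
Definition Conf (n : nat) : Type := Idx n -> R3.

Definition conf_open (n : nat) : Opens (Conf n) :=
  fun U => forall x, U x -> exists eps, eps > 0 /\
    forall y : Conf n, (forall i, dist3 (x i) (y i) < eps) -> U y.

Definition ext_idx {n : nat} {A : Type} (d : A) (f : Idx n -> A) (i : nat) : A :=
  match Compare_dec.lt_dec i n with
  | left h => f (exist _ i h)
  | right _ => d
  end.
Fixpoint sum3_upto (k : nat) (f : nat -> R3) : R3 :=
  match k with O => zero3 | S k' => add3 (sum3_upto k' f) (f k') end.
Definition sum_idx (n : nat) (f : Idx n -> R3) : R3 := sum3_upto n (ext_idx zero3 f).

(* M = (V, E, c_V, L, Theta) with V = Idx n; L and Theta are total
   functions, only their values on E resp. E_2 matter. *)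
Definition in_E2 {n} (E : Idx n -> Idx n -> Prop) (v w1 w2 : Idx n) : Prop :=
  E v w1 /\ E v w2 /\ w1 <> w2.

Definition is_molecular_graph (n : nat) (E : Idx n -> Idx n -> Prop)
    (c : Idx n -> nat) (L : Idx n -> Idx n -> R)
    (Th : Idx n -> Idx n -> Idx n -> R) : Prop :=
  (forall v, ~ E v v) /\
  (forall v w, E v w <-> E w v) /\
  (forall v w, E v w -> 0 < L v w /\ L v w = L w v) /\
  (forall v w1 w2, in_E2 E v w1 w2 ->
      0 < Th v w1 w2 <= PI /\ Th v w1 w2 = Th v w2 w1).

(* Points of the geometric realisation: vertices u, and points (v,w,t)
   of the segment [0, L(v,w)] of the edge (v,w); the point (v,w,t) is
   identified with (w,v,L(v,w)-t), (v,w,0) with v and (v,w,L(v,w)) with w. *)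
Definition is_endpoint {n} (L : Idx n -> Idx n -> R) (v w : Idx n) (t : R) (u : Idx n) : Prop :=
  (t = 0 /\ u = v) \/ (t = L v w /\ u = w).

Definition same_real_pt {n} (L : Idx n -> Idx n -> R)
    (v w : Idx n) (t : R) (v' w' : Idx n) (t' : R) : Prop :=
  (exists u, is_endpoint L v w t u /\ is_endpoint L v' w' t' u) \/
  (v = v' /\ w = w' /\ t = t') \/
  (v = w' /\ w = v' /\ t = L v w - t').

(* x : Conf n is (the vertex tuple of) a configuration: there is a map
   phi of the geometric realisation (given edgewise by phi v w on
   [0, L v w], with vertex values x) which is well defined, continuous,
   injective, isometric on each edge, and realises the bond angles. *)
Definition is_configuration (n : nat) (E : Idx n -> Idx n -> Prop)
    (L : Idx n -> Idx n -> R) (Th : Idx n -> Idx n -> Idx n -> R) (x : Conf n) : Prop :=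
  exists phi : Idx n -> Idx n -> R -> R3,
    (* well defined on the glued space *)
    (forall v w, E v w ->
        phi v w 0 = x v /\ phi v w (L v w) = x w /\
        forall t, 0 <= t <= L v w -> phi v w t = phi w v (L v w - t)) /\
    (forall v w, E v w -> forall s, 0 <= s <= L v w -> forall eps, eps > 0 ->
        exists delta, delta > 0 /\ forall t, 0 <= t <= L v w -> Rabs (t - s) < delta ->
          dist3 (phi v w t) (phi v w s) < eps) /\
    (forall v w, E v w -> forall s t, 0 <= s <= L v w -> 0 <= t <= L v w ->
        dist3 (phi v w s) (phi v w t) = Rabs (s - t)) /\
    (forall u u', x u = x u' -> u = u') /\
    (forall v w t u, E v w -> 0 <= t <= L v w -> phi v w t = x u -> is_endpoint L v w t u) /\
    (forall v w t v' w' t', E v w -> E v' w' -> 0 <= t <= L v w -> 0 <= t' <= L v' w' ->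
        phi v w t = phi v' w' t' -> same_real_pt L v w t v' w' t') /\
    (forall v w1 w2, in_E2 E v w1 w2 -> angle3 (x v) (x w1) (x w2) = Th v w1 w2).

Definition in_CP (n : nat) (E : Idx n -> Idx n -> Prop) (c : Idx n -> nat)
    (L : Idx n -> Idx n -> R) (Th : Idx n -> Idx n -> Idx n -> R) (x : Conf n) : Prop :=
  is_configuration n E L Th x /\
  sum_idx n (fun i => scal3 (INR (c i)) (x i)) = zero3.

Definition CP (n : nat) E c L Th : Type := {x : Conf n | in_CP n E c L Th x}.
Definition CP_open (n : nat) E c L Th : Opens (CP n E c L Th) :=
  sub_open (conf_open n) (in_CP n E c L Th).

Definition rot_conf {n} (A : SO3) (x : Conf n) : Conf n :=
  fun i => mat_vec (proj1_sig A) (x i).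

Definition orbit {n} E c L Th (x : CP n E c L Th) : CP n E c L Th -> Prop :=
  fun y => exists A : SO3, proj1_sig y = rot_conf A (proj1_sig x).
Definition Cint (n : nat) E c L Th : Type :=
  {O : CP n E c L Th -> Prop | exists x, O = orbit E c L Th x}.
Definition qmap {n} E c L Th (x : CP n E c L Th) : Cint n E c L Th :=
  exist _ (orbit E c L Th x) (ex_intro _ x eq_refl).
Definition Cint_open (n : nat) E c L Th : Opens (Cint n E c L Th) :=
  quot_open (CP_open n E c L Th) (qmap E c L Th).

(* q : P -> B with SO(3)-action act on P (B is by construction the orbit
   space with the quotient map). *)
Definition principal_SO3_bundle {P B : Type} (OP : Opens P) (OB : Opens B)
    (act : SO3 -> P -> P) (q : P -> B) : Prop :=
  continuous (prod_open SO3_open OP) OP (fun p => act (fst p) (snd p)) /\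
  homeo_onto_image (prod_open OP SO3_open) (prod_open OP OP)
    (fun p => (fst p, act (snd p) (fst p))) /\
  (forall b : B, exists U : B -> Prop, OB U /\ U b /\
     exists psi : {x : P | U (q x)} -> ({b' : B | U b'} * SO3),
       homeomorphism (sub_open OP (fun x => U (q x)))
                     (prod_open (sub_open OB U) SO3_open) psi /\
       (forall x, proj1_sig (fst (psi x)) = q (proj1_sig x)) /\
       (forall (g : SO3) x x', proj1_sig x' = act g (proj1_sig x) ->
          proj1_sig (snd (psi x')) = mat_mul (proj1_sig g) (proj1_sig (snd (psi x))))).

Definition trivial_SO3_bundle {P B : Type} (OP : Opens P) (OB : Opens B)
    (act : SO3 -> P -> P) (q : P -> B) : Prop :=
  exists Psi : P -> B * SO3,
    homeomorphism OP (prod_open OB SO3_open) Psi /\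
    (forall x, fst (Psi x) = q x) /\
    (forall (g : SO3) x,
       proj1_sig (snd (Psi (act g x))) = mat_mul (proj1_sig g) (proj1_sig (snd (Psi x)))).

(* Main.v *)
Require Import Defs.
From Stdlib Require Import Reals Lra Lia Psatz.
From Stdlib Require Import FunctionalExtensionality PropExtensionality ProofIrrelevance ClassicalEpsilon.
Open Scope R_scope.

Definition mk3 (a b c : R) : R3 := (a, b, c).
Definition transp (A : Mat3) : Mat3 :=
  match A with ((a1,a2,a3),(b1,b2,b3),(c1,c2,c3)) =>
    ((a1,b1,c1),(a2,b2,c2),(a3,b3,c3)) end.
Definition I3 : Mat3 := ((1,0,0),(0,1,0),(0,0,1)).

Ltac peq := repeat match goal with |- (_,_) = (_,_) => apply (f_equal2 pair) end.

Ltac d3 u := let a := fresh "a" in let b := fresh "b" in let c := fresh "c" in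
  destruct u as [[a b] c].

Lemma dot3_comm u v : dot3 u v = dot3 v u.
Proof. d3 u; d3 v; simpl; ring. Qed.

Lemma dot3_ge0 u : 0 <= dot3 u u.
Proof. d3 u; simpl; nra. Qed.

Lemma norm3_sq u : norm3 u * norm3 u = dot3 u u.
Proof. unfold norm3; apply sqrt_sqrt, dot3_ge0. Qed.

Lemma norm3_ge0 u : 0 <= norm3 u.
Proof. apply sqrt_pos. Qed.

Lemma mat_vec_add A u v : mat_vec A (add3 u v) = add3 (mat_vec A u) (mat_vec A v).
Proof. destruct A as [[r1 r2] r3]; d3 r1; d3 r2; d3 r3; d3 u; d3 v; simpl; f_equal; [f_equal|]; ring. Qed.

Lemma mat_vec_scal A k u : mat_vec A (scal3 k u) = scal3 k (mat_vec A u).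
Proof. destruct A as [[r1 r2] r3]; d3 r1; d3 r2; d3 r3; d3 u; simpl; f_equal; [f_equal|]; ring. Qed.

Lemma mat_vec_sub A u v : mat_vec A (sub3 u v) = sub3 (mat_vec A u) (mat_vec A v).
Proof. unfold sub3; rewrite mat_vec_add, mat_vec_scal; auto. Qed.

Lemma mat_vec_zero A : mat_vec A zero3 = zero3.
Proof. destruct A as [[r1 r2] r3]; d3 r1; d3 r2; d3 r3; unfold zero3; simpl; f_equal; [f_equal|]; ring. Qed.

Lemma mat_vec_mul A B u : mat_vec (mat_mul A B) u = mat_vec A (mat_vec B u).
Proof. destruct A as [[r1 r2] r3]; d3 r1; d3 r2; d3 r3;
  destruct B as [[s1 s2] s3]; d3 s1; d3 s2; d3 s3; d3 u; simpl; f_equal; [f_equal|]; ring. Qed.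

Lemma mat_vec_I u : mat_vec I3 u = u.
Proof. d3 u; simpl; f_equal; [f_equal|]; ring. Qed.

Lemma sum_sq0 x y z : x*x + y*y + z*z = 0 -> x = 0 /\ y = 0 /\ z = 0.
Proof. intros; repeat split; nra. Qed.

Lemma so3_cross r1 r2 r3 : is_SO3 (r1, r2, r3) ->
  r1 = cross3 r2 r3 /\ r2 = cross3 r3 r1 /\ r3 = cross3 r1 r2.
Proof.
  intros [[H1 [H2 [H3 [H12 [H13 H23]]]]] Hd]. simpl in Hd.
  d3 r1; d3 r2; d3 r3; simpl in *.
  assert (K: forall p q r x y z : R, p*p+q*q+r*r = 1 -> x*x+y*y+z*z = 1 -> p*x+q*y+r*z = 1 ->
     p = x /\ q = y /\ r = z).
  { intros p q r x y z E1 E2 E3.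
    assert (E: (p-x)*(p-x) + (q-y)*(q-y) + (r-z)*(r-z) = 0) by nra.
    apply sum_sq0 in E; lra. }
  assert (Lg: forall p q r x y z : R,
     (q*z-r*y)*(q*z-r*y) + (r*x-p*z)*(r*x-p*z) + (p*y-q*x)*(p*y-q*x)
     = (p*p+q*q+r*r)*(x*x+y*y+z*z) - (p*x+q*y+r*z)*(p*x+q*y+r*z)) by (intros; ring).
  split; [|split]; simpl.
  - destruct (K a b c (b0*c1-c0*b1) (c0*a1-a0*c1) (a0*b1-b0*a1)) as [E1 [E2 E3]];
    [exact H1 | rewrite Lg, H2, H3, H23; ring | lra | rewrite <- E1, <- E2, <- E3; reflexivity].
  - destruct (K a0 b0 c0 (b1*c-c1*b) (c1*a-a1*c) (a1*b-b1*a)) as [E1 [E2 E3]];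
    [exact H2 | rewrite Lg, H3, H1; replace (a1*a+b1*b+c1*c) with 0 by lra; ring | lra | rewrite <- E1, <- E2, <- E3; reflexivity].
  - destruct (K a1 b1 c1 (b*c0-c*b0) (c*a0-a*c0) (a*b0-b*a0)) as [E1 [E2 E3]];
    [exact H3 | rewrite Lg, H1, H2; replace (a*a0+b*b0+c*c0) with 0 by lra; ring | lra | rewrite <- E1, <- E2, <- E3; reflexivity].
Qed.

Lemma lc3 (g P Q S m1 m2 m3 : R) : P = 0 -> Q = 0 -> S = 0 -> g = m1*P + m2*Q + m3*S -> g = 0.
Proof. intros -> -> -> ->; ring. Qed.

Lemma so3_transp A : is_SO3 A -> is_SO3 (transp A).
Proof.
  intros HA. destruct A as [[r1 r2] r3].
  destruct (so3_cross _ _ _ HA) as [_ [_ E3]].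
  destruct HA as [[H1 [H2 [H3 [H12 [H13 H23]]]]] Hd].
  subst r3. d3 r1; d3 r2. simpl in *.
  assert (Lg: forall p q r x y z : R,
     (q*z-r*y)*(q*z-r*y) + (r*x-p*z)*(r*x-p*z) + (p*y-q*x)*(p*y-q*x)
     = (p*p+q*q+r*r)*(x*x+y*y+z*z) - (p*x+q*y+r*z)*(p*x+q*y+r*z)) by (intros; ring).
  assert (P0: a*a+b*b+c*c-1 = 0) by lra.
  assert (Q0: a0*a0+b0*b0+c0*c0-1 = 0) by lra.
  assert (S0: a*a0+b*b0+c*c0 = 0) by lra.
  repeat split; simpl; try lra; apply Rminus_diag_uniq || idtac.
  - apply (lc3 _ _ _ _ (1-a0*a0+(a0*a0+b0*b0+c0*c0-1)) (1-a*a) (-(a*a0+b*b0+c*c0 - 2*a*a0)) P0 Q0 S0); ring.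
  - apply (lc3 _ _ _ _ (1-b0*b0+(a0*a0+b0*b0+c0*c0-1)) (1-b*b) (-(a*a0+b*b0+c*c0 - 2*b*b0)) P0 Q0 S0); ring.
  - apply (lc3 _ _ _ _ (1-c0*c0+(a0*a0+b0*b0+c0*c0-1)) (1-c*c) (-(a*a0+b*b0+c*c0 - 2*c*c0)) P0 Q0 S0); ring.
  - apply (lc3 _ _ _ _ (-(a0*b0)) (-(a*b)) (a0*b+a*b0) P0 Q0 S0); ring.
  - apply (lc3 _ _ _ _ (-(c0*a0)) (-(c*a)) (c0*a+c*a0) P0 Q0 S0); ring.
  - apply (lc3 _ _ _ _ (-(b0*c0)) (-(b*c)) (b0*c+b*c0) P0 Q0 S0); ring.
Qed.

Lemma lc6 (g P1 P2 P3 P4 P5 P6 m1 m2 m3 m4 m5 m6 : R) :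
  P1 = 0 -> P2 = 0 -> P3 = 0 -> P4 = 0 -> P5 = 0 -> P6 = 0 ->
  g = m1*P1 + m2*P2 + m3*P3 + m4*P4 + m5*P5 + m6*P6 -> g = 0.
Proof. intros -> -> -> -> -> -> ->; ring. Qed.

Lemma so3_dot A u v : is_SO3 A -> dot3 (mat_vec A u) (mat_vec A v) = dot3 u v.
Proof.
  intros HA. pose proof (so3_transp A HA) as HT.
  destruct A as [[r1 r2] r3]; d3 r1; d3 r2; d3 r3.
  destruct HT as [[H1 [H2 [H3 [H12 [H13 H23]]]]] _]; simpl in *.
  destruct u as [[u1 u2] u3]; destruct v as [[v1 v2] v3]; simpl.
  apply Rminus_diag_uniq.
  apply (lc6 _ (a*a+a0*a0+a1*a1-1) (b*b+b0*b0+b1*b1-1) (c*c+c0*c0+c1*c1-1)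
     (a*b+a0*b0+a1*b1) (a*c+a0*c0+a1*c1) (b*c+b0*c0+b1*c1)
     (u1*v1) (u2*v2) (u3*v3) (u1*v2+u2*v1) (u1*v3+u3*v1) (u2*v3+u3*v2)); try lra; ring.
Qed.

Lemma so3_norm A u : is_SO3 A -> norm3 (mat_vec A u) = norm3 u.
Proof. intros; unfold norm3; rewrite so3_dot; auto. Qed.

Lemma so3_dist A u v : is_SO3 A -> dist3 (mat_vec A u) (mat_vec A v) = dist3 u v.
Proof. intros; unfold dist3; rewrite <- mat_vec_sub; apply so3_norm; auto. Qed.

Lemma dot_cross_cross p q u v : dot3 (cross3 p q) (cross3 u v) = dot3 p u * dot3 q v - dot3 p v * dot3 q u.
Proof. d3 p; d3 q; d3 u; d3 v; simpl; ring. Qed.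

Lemma so3_cross_eq A u v : is_SO3 A ->
  mat_vec A (cross3 u v) = cross3 (mat_vec A u) (mat_vec A v).
Proof.
  intros HA. destruct A as [[r1 r2] r3].
  destruct (so3_cross _ _ _ HA) as [E1 [E2 E3]].
  cbn [mat_vec]. unfold cross3 at 4.
  f_equal; [f_equal|].
  - rewrite E1, dot_cross_cross; ring.
  - rewrite E2, dot_cross_cross; ring.
  - rewrite E3, dot_cross_cross; ring.
Qed.

Lemma transp_transp A : transp (transp A) = A.
Proof. destruct A as [[r1 r2] r3]; d3 r1; d3 r2; d3 r3; reflexivity. Qed.

Lemma I3_SO3 : is_SO3 I3.
Proof. unfold is_SO3, I3; simpl; repeat split; ring. Qed.

Lemma det3_mul A B : det3 (mat_mul A B) = det3 A * det3 B.
Proof. destruct A as [[r1 r2] r3]; d3 r1; d3 r2; d3 r3;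
  destruct B as [[s1 s2] s3]; d3 s1; d3 s2; d3 s3; simpl; ring. Qed.

Lemma mat_mul_rows A B : mat_mul A B =
  match A with (a1, a2, a3) => (mat_vec (transp B) a1, mat_vec (transp B) a2, mat_vec (transp B) a3) end.
Proof. destruct A as [[r1 r2] r3]; d3 r1; d3 r2; d3 r3;
  destruct B as [[s1 s2] s3]; d3 s1; d3 s2; d3 s3; simpl; peq; ring. Qed.

Lemma so3_mul A B : is_SO3 A -> is_SO3 B -> is_SO3 (mat_mul A B).
Proof.
  intros HA HB. split; [|rewrite det3_mul; destruct HA, HB; rewrite H0, H2; ring].
  rewrite mat_mul_rows. pose proof (so3_transp B HB) as HT.
  destruct A as [[r1 r2] r3]. destruct HA as [[H1 [H2 [H3 [H12 [H13 H23]]]]] _].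
  simpl. rewrite !so3_dot by exact HT. repeat split; auto.
Qed.

Lemma mat_mul_transp_r A : is_SO3 A -> mat_mul A (transp A) = I3.
Proof.
  intros HA. destruct A as [[r1 r2] r3]. pose proof HA as [[H1 [H2 [H3 [H12 [H13 H23]]]]] _].
  d3 r1; d3 r2; d3 r3; simpl in *. unfold I3.
  peq; try lra.
Qed.

Lemma mat_mul_transp_l A : is_SO3 A -> mat_mul (transp A) A = I3.
Proof.
  intros HA. rewrite <- (transp_transp A) at 2. apply mat_mul_transp_r, so3_transp; auto.
Qed.

Lemma mat_mul_assoc A B C : mat_mul (mat_mul A B) C = mat_mul A (mat_mul B C).
Proof. destruct A as [[r1 r2] r3]; d3 r1; d3 r2; d3 r3;
  destruct B as [[s1 s2] s3]; d3 s1; d3 s2; d3 s3;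
  destruct C as [[t1 t2] t3]; d3 t1; d3 t2; d3 t3; simpl; peq; ring. Qed.

Lemma mat_mul_I_l A : mat_mul I3 A = A.
Proof. destruct A as [[r1 r2] r3]; d3 r1; d3 r2; d3 r3; simpl; peq; ring. Qed.
Lemma mat_mul_I_r A : mat_mul A I3 = A.
Proof. destruct A as [[r1 r2] r3]; d3 r1; d3 r2; d3 r3; simpl; peq; ring. Qed.

Definition normalize (u : R3) : R3 := scal3 (/ norm3 u) u.
Definition frame (a b : R3) : Mat3 :=
  let e1 := normalize a in let e3 := normalize (cross3 a b) in (e1, cross3 e3 e1, e3).

Lemma dot_scal_l k u v : dot3 (scal3 k u) v = k * dot3 u v.
Proof. d3 u; d3 v; simpl; ring. Qed.
Lemma dot_scal_r k u v : dot3 u (scal3 k v) = k * dot3 u v.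
Proof. d3 u; d3 v; simpl; ring. Qed.
Lemma dot_cross_l u v : dot3 u (cross3 u v) = 0.
Proof. d3 u; d3 v; simpl; ring. Qed.
Lemma dot_cross_r u v : dot3 v (cross3 u v) = 0.
Proof. d3 u; d3 v; simpl; ring. Qed.
Lemma cross_scal_l k u v : cross3 (scal3 k u) v = scal3 k (cross3 u v).
Proof. d3 u; d3 v; simpl; peq; ring. Qed.
Lemma cross_scal_r k u v : cross3 u (scal3 k v) = scal3 k (cross3 u v).
Proof. d3 u; d3 v; simpl; peq; ring. Qed.

Lemma normalize_unit u : norm3 u <> 0 -> dot3 (normalize u) (normalize u) = 1.
Proof.
  intros H. unfold normalize. rewrite dot_scal_l, dot_scal_r, <- norm3_sq. field; auto.
Qed.

Lemma frame_SO3 a b : norm3 a <> 0 -> norm3 (cross3 a b) <> 0 -> is_SO3 (frame a b).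
Proof.
  intros Ha Hc. unfold frame.
  set (e1 := normalize a). set (e3 := normalize (cross3 a b)).
  assert (U1 : dot3 e1 e1 = 1) by (apply normalize_unit; auto).
  assert (U3 : dot3 e3 e3 = 1) by (apply normalize_unit; auto).
  assert (O13 : dot3 e1 e3 = 0).
  { unfold e1, e3, normalize. rewrite dot_scal_l, dot_scal_r, dot_cross_l. ring. }
  assert (O31 : dot3 e3 e1 = 0) by (rewrite dot3_comm; auto).
  split; [split; [|split; [|split; [|split; [|split]]]]|].
  - exact U1.
  - rewrite dot_cross_cross, U1, U3, O31, O13; ring.
  - exact U3.
  - apply dot_cross_r.
  - exact O13.
  - rewrite dot3_comm; apply dot_cross_l.
  - simpl det3. assert (K: forall p q : R3, dot3 p (cross3 (cross3 q p) q) = dot3 p p * dot3 q q - dot3 p q * dot3 p q)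
      by (intros p q; d3 p; d3 q; simpl; ring).
    rewrite K, U1, U3, O13; ring.
Qed.

Lemma normalize_equiv g u : is_SO3 g -> mat_vec g (normalize u) = normalize (mat_vec g u).
Proof. intros H; unfold normalize; rewrite mat_vec_scal, so3_norm; auto. Qed.

Lemma frame_equiv g a b : is_SO3 g ->
  frame (mat_vec g a) (mat_vec g b) = mat_mul (frame a b) (transp g).
Proof.
  intros Hg. rewrite mat_mul_rows. unfold frame. rewrite transp_transp.
  rewrite <- so3_cross_eq by auto. rewrite <- !normalize_equiv by auto.
  rewrite <- so3_cross_eq by auto. reflexivity.
Qed.

Lemma norm3_zero u : norm3 u = 0 -> dot3 u u = 0.
Proof. intros H; rewrite <- norm3_sq, H; ring. Qed.

Lemma sub3_zero q p : dot3 (sub3 q p) (sub3 q p) = 0 -> q = p.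
Proof. intros H; d3 q; d3 p; simpl in H. apply sum_sq0 in H. peq; lra. Qed.

Lemma nondeg (p q r : R3) : q <> p -> r <> p -> 0 < angle3 p q r -> angle3 p q r <> PI ->
  norm3 (sub3 q p) <> 0 /\ norm3 (cross3 (sub3 q p) (sub3 r p)) <> 0.
Proof.
  intros Hq Hr Hpos Hpi.
  assert (Na : norm3 (sub3 q p) <> 0) by (intro H; apply Hq, sub3_zero, norm3_zero; auto).
  assert (Nb : norm3 (sub3 r p) <> 0) by (intro H; apply Hr, sub3_zero, norm3_zero; auto).
  split; auto. intro Hc. apply norm3_zero in Hc. rewrite dot_cross_cross in Hc.
  unfold angle3 in *. set (a := sub3 q p) in *. set (b := sub3 r p) in *.
  rewrite <- !norm3_sq in Hc. rewrite (dot3_comm b a) in Hc.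
  set (na := norm3 a) in *. set (nb := norm3 b) in *. set (d := dot3 a b) in *.
  assert (E : (d / (na * nb)) * (d / (na * nb)) = 1).
  { assert (Hn : na * nb <> 0) by (apply Rmult_integral_contrapositive; auto).
    replace ((d / (na * nb)) * (d / (na * nb))) with ((d*d) / ((na*na)*(nb*nb))) by (field; auto).
    replace (d*d) with ((na*na)*(nb*nb)) by lra. field. split; auto. }
  assert (E2 : d / (na*nb) = 1 \/ d / (na*nb) = -1) by nra.
  destruct E2 as [E2|E2]; rewrite E2 in *.
  - rewrite acos_1 in Hpos; lra.
  - unfold acos in Hpi. destruct (Rle_dec (-1) (-1)); lra.
Qed.

Lemma so3_inj A p q : is_SO3 A -> mat_vec A p = mat_vec A q -> p = q.
Proof.
  intros HA H. rewrite <- (mat_vec_I p), <- (mat_vec_I q), <- (mat_mul_transp_l A HA),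
    !mat_vec_mul, H; auto.
Qed.

Lemma so3_angle A p q r : is_SO3 A ->
  angle3 (mat_vec A p) (mat_vec A q) (mat_vec A r) = angle3 p q r.
Proof. intros HA; unfold angle3; rewrite <- !mat_vec_sub, !so3_dot, !so3_norm; auto. Qed.

Lemma sum3_upto_mat A k f : sum3_upto k (fun j => mat_vec A (f j)) = mat_vec A (sum3_upto k f).
Proof.
  induction k; simpl. - symmetry; apply mat_vec_zero.
  - rewrite IHk, mat_vec_add; auto.
Qed.

Lemma rot_in_CP n E c L Th (A : Mat3) (x : Conf n) : is_SO3 A -> in_CP n E c L Th x ->
  in_CP n E c L Th (fun i => mat_vec A (x i)).
Proof.
  intros HA [[phi [H1 [H2 [H3 [H4 [H5 [H6 H7]]]]]]] Hs]. split.
  - exists (fun v w t => mat_vec A (phi v w t)). repeat split.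
    + destruct (H1 v w H) as [-> _]; auto.
    + destruct (H1 v w H) as [_ [-> _]]; auto.
    + intros t Ht. destruct (H1 v w H) as [_ [_ K]]. rewrite K; auto.
    + intros v w Hvw s Hs0 eps Heps. destruct (H2 v w Hvw s Hs0 eps Heps) as [d [Hd K]].
      exists d; split; auto. intros; rewrite so3_dist; auto.
    + intros; rewrite so3_dist; auto.
    + intros u u' Hu; apply H4, (so3_inj A); auto.
    + intros v w t u Hvw Ht He; apply H5; auto; apply (so3_inj A); auto.
    + intros v w t v' w' t' Hvw Hvw' Ht Ht' He; apply H6; auto; apply (so3_inj A); auto.
    + intros v w1 w2 H; rewrite so3_angle; auto.
  - unfold sum_idx in *.
    assert (K: forall j, ext_idx zero3 (fun i => scal3 (INR (c i)) (mat_vec A (x i))) j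
       = mat_vec A (ext_idx zero3 (fun i => scal3 (INR (c i)) (x i)) j)).
    { intros j; unfold ext_idx; destruct (Compare_dec.lt_dec j n).
      - rewrite mat_vec_scal; auto. - rewrite mat_vec_zero; auto. }
    rewrite (functional_extensionality _ _ K), sum3_upto_mat, Hs, mat_vec_zero; auto.
Qed.

Lemma cs3 p q : dot3 p q * dot3 p q <= dot3 p p * dot3 q q.
Proof. pose proof (dot3_ge0 (cross3 p q)) as H. rewrite dot_cross_cross, (dot3_comm q p) in H. lra. Qed.

Lemma dot_le_norm p q : dot3 p q <= norm3 p * norm3 q.
Proof.
  pose proof (cs3 p q). rewrite <- !norm3_sq in H.
  pose proof (norm3_ge0 p); pose proof (norm3_ge0 q).
  assert (0 <= norm3 p * norm3 q) by (apply Rmult_le_pos; auto).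
  replace (norm3 p * norm3 p * (norm3 q * norm3 q)) with ((norm3 p * norm3 q) * (norm3 p * norm3 q)) in H by ring.
  nra.
Qed.

Lemma sqrt_le_sq x y : 0 <= y -> x <= y * y -> sqrt x <= y.
Proof. intros Hy Hx. rewrite <- (sqrt_square y Hy). apply sqrt_le_1_alt; auto. Qed.

Lemma norm3_add p q : norm3 (add3 p q) <= norm3 p + norm3 q.
Proof.
  unfold norm3 at 1. apply sqrt_le_sq.
  - pose proof (norm3_ge0 p); pose proof (norm3_ge0 q); lra.
  - replace (dot3 (add3 p q) (add3 p q)) with (dot3 p p + dot3 q q + 2 * dot3 p q)
      by (d3 p; d3 q; simpl; ring).
    rewrite <- !norm3_sq. pose proof (dot_le_norm p q). nra.
Qed.

Lemma dist3_tri u v w : dist3 u w <= dist3 u v + dist3 v w.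
Proof.
  unfold dist3. replace (sub3 u w) with (add3 (sub3 u v) (sub3 v w)) by (d3 u; d3 v; d3 w; simpl; peq; ring).
  apply norm3_add.
Qed.

Lemma dist3_refl u : dist3 u u = 0.
Proof. unfold dist3, norm3. replace (dot3 (sub3 u u) (sub3 u u)) with 0 by (d3 u; simpl; ring). apply sqrt_0. Qed.

Lemma dist3_sym u v : dist3 u v = dist3 v u.
Proof. unfold dist3, norm3. f_equal. d3 u; d3 v; simpl; ring. Qed.

Lemma dist3_ge0 u v : 0 <= dist3 u v.
Proof. apply norm3_ge0. Qed.

Definition Dv (A B : Mat3) : R3 := match A, B with (a1,a2,a3),(b1,b2,b3) =>
  (dist3 a1 b1, dist3 a2 b2, dist3 a3 b3) end.

Lemma mdist_Dv A B : mdist A B = norm3 (Dv A B).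
Proof.
  destruct A as [[a1 a2] a3]; destruct B as [[b1 b2] b3]. simpl. unfold norm3. f_equal. simpl.
  unfold dist3. rewrite !norm3_sq. auto.
Qed.

Lemma norm3_mono u v : 0 <= fst (fst u) <= fst (fst v) -> 0 <= snd (fst u) <= snd (fst v) ->
  0 <= snd u <= snd v -> norm3 u <= norm3 v.
Proof. d3 u; d3 v; simpl; intros. unfold norm3. apply sqrt_le_1_alt. simpl. nra. Qed.

Lemma mdist_tri A B C : mdist A C <= mdist A B + mdist B C.
Proof.
  rewrite !mdist_Dv. eapply Rle_trans; [|apply norm3_add].
  apply norm3_mono; destruct A as [[a1 a2] a3]; destruct B as [[b1 b2] b3]; destruct C as [[c1 c2] c3];
  simpl; split; try apply dist3_ge0; apply dist3_tri.
Qed.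

Lemma mdist_refl A : mdist A A = 0.
Proof. rewrite mdist_Dv. destruct A as [[a1 a2] a3]; simpl; rewrite !dist3_refl.
  unfold norm3; simpl. match goal with |- sqrt ?x = 0 => replace x with 0 by ring end; apply sqrt_0. Qed.

Lemma fin_min n (P : Idx n -> R -> Prop) :
  (forall i d d', P i d -> 0 < d' <= d -> P i d') ->
  (forall i, exists d, d > 0 /\ P i d) -> exists d, d > 0 /\ forall i, P i d.
Proof.
  intros Hm Hex.
  assert (K: forall m, (m <= n)%nat -> exists d, d > 0 /\ forall i : Idx n, (proj1_sig i < m)%nat -> P i d).
  { induction m; intros Hmn.
    - exists 1; split; [lra|]. intros i Hi; lia.
    - destruct IHm as [d0 [Hd0 K0]]; [lia|].
      assert (Hlt : (m < n)%nat) by lia.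
      destruct (Hex (exist _ m Hlt)) as [d1 [Hd1 K1]].
      exists (Rmin d0 d1); split; [apply Rmin_glb_lt; auto|].
      intros [k Hk] Hkm. simpl in Hkm.
      destruct (Nat.eq_dec k m) as [->|Hne].
      + rewrite (proof_irrelevance _ Hk Hlt). apply (Hm _ d1); auto.
        split; [apply Rmin_glb_lt; auto| apply Rmin_r].
      + apply (Hm _ d0); [apply K0; simpl; lia|].
        split; [apply Rmin_glb_lt; auto| apply Rmin_l]. }
  destruct (K n (le_n n)) as [d [Hd Kd]]. exists d; split; auto.
  intros i; apply Kd; destruct i; simpl; auto.
Qed.

Record NS := { car :> Type; nr : car -> car -> R -> Prop;
  nr_refl : forall x e, e > 0 -> nr x x e;
  nr_mono : forall x y e e', nr x y e -> e <= e' -> nr x y e';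
  nr_open : forall x y e, nr x y e -> exists d, d > 0 /\ forall z, nr y z d -> nr x z e }.
Arguments nr {_}.

Definition oo (X : NS) : Opens X :=
  fun U => forall x, U x -> exists eps, eps > 0 /\ forall y, nr x y eps -> U y.

Program Definition MatNS : NS := {| car := Mat3; nr := fun A B e => mdist A B < e |}.
Next Obligation. rewrite mdist_refl; lra. Qed.
Next Obligation. lra. Qed.
Next Obligation.
  exists (e - mdist x y); split; [lra|]. intros z Hz. pose proof (mdist_tri x y z). lra.
Qed.

Program Definition ConfNS (n : nat) : NS :=
  {| car := Conf n; nr := fun x y e => forall i, dist3 (x i) (y i) < e |}.
Next Obligation. rewrite dist3_refl; lra. Qed.
Next Obligation. specialize (H i); lra. Qed.
Next Obligation.
  destruct (fin_min n (fun i d => d <= e - dist3 (x i) (y i))) as [d [Hd K]].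
  - intros; lra.
  - intros i; exists (e - dist3 (x i) (y i)); split; [specialize (H i); lra| lra].
  - exists d; split; auto. intros z Hz i. pose proof (dist3_tri (x i) (y i) (z i)).
    specialize (K i); specialize (Hz i). lra.
Qed.

Program Definition SubNS (X : NS) (P : X -> Prop) : NS :=
  {| car := {x : X | P x}; nr := fun s t e => nr (proj1_sig s) (proj1_sig t) e |}.
Next Obligation. apply nr_refl; auto. Qed.
Next Obligation. eapply nr_mono; eauto. Qed.
Next Obligation. destruct (nr_open _ _ _ _ H) as [d [Hd K]]. exists d; split; auto. Qed.

Program Definition ProdNS (X Y : NS) : NS :=
  {| car := (X * Y)%type; nr := fun p q e => nr (fst p) (fst q) e /\ nr (snd p) (snd q) e |}.
Next Obligation. split; apply nr_refl; auto. Qed.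
Next Obligation. split; eapply nr_mono; eauto. Qed.
Next Obligation.
  destruct (nr_open _ _ _ _ H) as [d1 [Hd1 K1]]. destruct (nr_open _ _ _ _ H0) as [d2 [Hd2 K2]].
  exists (Rmin d1 d2); split; [apply Rmin_glb_lt; auto|].
  intros z [Z1 Z2]; split; [apply K1; eapply nr_mono; [eauto|apply Rmin_l]
                           | apply K2; eapply nr_mono; [eauto|apply Rmin_r]].
Qed.

Lemma conf_oo n : conf_open n = oo (ConfNS n).
Proof. reflexivity. Qed.
Lemma mat_oo : mat_open = oo MatNS.
Proof. reflexivity. Qed.

Lemma sub_iff (X : NS) (P : X -> Prop) V : sub_open (oo X) P V <-> oo (SubNS X P) V.
Proof.
  split.
  - intros [U [HU HV]] s Hs. apply HV in Hs. destruct (HU _ Hs) as [e [He K]].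
    exists e; split; auto. intros t Ht. apply HV, K, Ht.
  - intros HO.
    exists (fun y => exists (s : {x : X | P x}) e, V s /\ e > 0 /\
              (forall t : {x : X | P x}, nr (proj1_sig s) (proj1_sig t) e -> V t) /\ nr (proj1_sig s) y e).
    split.
    + intros y [s [e [Vs [He [K Hy]]]]]. destruct (nr_open _ _ _ _ Hy) as [d [Hd Kd]].
      exists d; split; auto. intros z Hz. exists s, e; repeat split; auto.
    + intros s; split.
      * intros Vs. destruct (HO s Vs) as [e [He K]]. exists s, e; repeat split; auto.
        apply nr_refl; auto.
      * intros [s' [e [Vs' [He [K Hy]]]]]. apply K; auto.
Qed.

Lemma prod_iff (X Y : NS) W : prod_open (oo X) (oo Y) W <-> oo (ProdNS X Y) W.
Proof.
  split.
  - intros HW p Hp. destruct (HW p Hp) as [U [V [HU [HV [Up [Vp K]]]]]].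
    destruct (HU _ Up) as [e1 [He1 K1]]. destruct (HV _ Vp) as [e2 [He2 K2]].
    exists (Rmin e1 e2); split; [apply Rmin_glb_lt; auto|].
    intros [a b] [H1 H2]. apply K; [apply K1; eapply nr_mono; [eauto|apply Rmin_l]
                                   |apply K2; eapply nr_mono; [eauto|apply Rmin_r]].
  - intros HO p Hp. destruct (HO p Hp) as [e [He K]].
    exists (fun a => nr (fst p) a e), (fun b => nr (snd p) b e). repeat split.
    + intros a Ha. destruct (nr_open _ _ _ _ Ha) as [d [Hd Kd]]. exists d; split; auto.
    + intros b Hb. destruct (nr_open _ _ _ _ Hb) as [d [Hd Kd]]. exists d; split; auto.
    + apply nr_refl; auto.
    + apply nr_refl; auto.
    + intros a b Ha Hb. apply (K (a, b)). split; auto.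
Qed.

Definition cont (X Y : NS) (f : X -> Y) (x : X) : Prop :=
  forall e, e > 0 -> exists d, d > 0 /\ forall y, nr x y d -> nr (f x) (f y) e.

Lemma cont_continuous (X Y : NS) (f : X -> Y) : (forall x, cont X Y f x) -> continuous (oo X) (oo Y) f.
Proof.
  intros Hc V HV x Hx. destruct (HV _ Hx) as [e [He K]]. destruct (Hc x e He) as [d [Hd Kd]].
  exists d; split; auto.
Qed.

Lemma continuous_ext {X Y : Type} (OX OX' : Opens X) (OY OY' : Opens Y) f :
  (forall U, OX U -> OX' U) -> (forall V, OY' V -> OY V) -> continuous OX OY f -> continuous OX' OY' f.
Proof. intros H1 H2 Hc V HV. apply H1, Hc, H2, HV. Qed.

Lemma cont_comp (X Y Z : NS) (f : X -> Y) (g : Y -> Z) x :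
  cont X Y f x -> cont Y Z g (f x) -> cont X Z (fun y => g (f y)) x.
Proof.
  intros Hf Hg e He. destruct (Hg e He) as [d1 [Hd1 K1]]. destruct (Hf d1 Hd1) as [d2 [Hd2 K2]].
  exists d2; split; auto.
Qed.

Lemma cont_pair (X Y Z : NS) (f : X -> Y) (g : X -> Z) x :
  cont X Y f x -> cont X Z g x -> cont X (ProdNS Y Z) (fun y => (f y, g y)) x.
Proof.
  intros Hf Hg e He. destruct (Hf e He) as [d1 [Hd1 K1]]. destruct (Hg e He) as [d2 [Hd2 K2]].
  exists (Rmin d1 d2); split; [apply Rmin_glb_lt; auto|].
  intros y Hy; split; simpl; [apply K1|apply K2]; eapply nr_mono; eauto; [apply Rmin_l|apply Rmin_r].
Qed.

Lemma cont_fst (X Y : NS) p : cont (ProdNS X Y) X fst p.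
Proof. intros e He; exists e; split; auto. intros y [H _]; auto. Qed.
Lemma cont_snd (X Y : NS) p : cont (ProdNS X Y) Y snd p.
Proof. intros e He; exists e; split; auto. intros y [_ H]; auto. Qed.
Lemma cont_id (X : NS) x : cont X X (fun y => y) x.
Proof. intros e He; exists e; split; auto. Qed.
Lemma cont_proj1 (X : NS) (P : X -> Prop) s : cont (SubNS X P) X (@proj1_sig _ _) s.
Proof. intros e He; exists e; split; auto. Qed.
Lemma cont_sub_in (X Y : NS) (P : Y -> Prop) (f : X -> {y : Y | P y}) x :
  cont X Y (fun z => proj1_sig (f z)) x -> cont X (SubNS Y P) f x.
Proof. intros H e He. destruct (H e He) as [d [Hd K]]. exists d; split; auto. Qed.

Definition contR (X : NS) (f : X -> R) (x : X) : Prop :=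
  forall e, e > 0 -> exists d, d > 0 /\ forall y, nr x y d -> Rabs (f y - f x) < e.

Lemma cpt_id y : continuity_pt (fun t => t) y.
Proof. exact (derivable_continuous_pt id y (derivable_pt_id y)). Qed.
Lemma cpt_sq y : continuity_pt (fun t => t * t) y.
Proof. exact (continuity_pt_mult id id y (cpt_id y) (cpt_id y)). Qed.
Lemma cpt_scal k y : continuity_pt (fun t => k * t) y.
Proof. exact (continuity_pt_scal id k y (cpt_id y)). Qed.
Lemma cpt_inv y : y <> 0 -> continuity_pt (fun t => / t) y.
Proof. intros H; exact (continuity_pt_inv id y (cpt_id y) H). Qed.

Lemma contR_comp1 X f x (g : R -> R) : contR X f x -> continuity_pt g (f x) ->
  contR X (fun y => g (f y)) x.
Proof.
  intros Hf Hg e He. destruct (Hg e He) as [a [Ha K]].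
  destruct (Hf a Ha) as [d [Hd Kd]]. exists d; split; auto. intros y Hy.
  destruct (Req_dec (f x) (f y)) as [E|E].
  - rewrite E, Rminus_diag, Rabs_R0; auto.
  - apply (K (f y)). split; [split; [constructor|auto]|]. apply Kd, Hy.
Qed.

Lemma contR_ext X f g x : (forall y, f y = g y) -> contR X f x -> contR X g x.
Proof. intros E H e He. destruct (H e He) as [d [Hd K]]. exists d; split; auto.
  intros y Hy; rewrite <- !E; auto. Qed.

Lemma contR_const X k x : contR X (fun _ => k) x.
Proof. intros e He; exists 1; split; [lra|]. intros; rewrite Rminus_diag, Rabs_R0; auto. Qed.

Lemma contR_plus X f g x : contR X f x -> contR X g x -> contR X (fun y => f y + g y) x.
Proof.
  intros Hf Hg e He. destruct (Hf (e/2)) as [d1 [Hd1 K1]]; [lra|].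
  destruct (Hg (e/2)) as [d2 [Hd2 K2]]; [lra|].
  exists (Rmin d1 d2); split; [apply Rmin_glb_lt; auto|]. intros y Hy.
  specialize (K1 y (nr_mono _ _ _ _ _ Hy (Rmin_l _ _))).
  specialize (K2 y (nr_mono _ _ _ _ _ Hy (Rmin_r _ _))).
  replace (f y + g y - (f x + g x)) with ((f y - f x) + (g y - g x)) by ring.
  eapply Rle_lt_trans; [apply Rabs_triang|]. lra.
Qed.

Lemma contR_scal X k f x : contR X f x -> contR X (fun y => k * f y) x.
Proof. intros H; apply (contR_comp1 X f x (fun t => k * t)); auto; apply cpt_scal. Qed.

Lemma contR_opp X f x : contR X f x -> contR X (fun y => - f y) x.
Proof. intros H; apply (contR_ext X (fun y => -1 * f y)); [intros; ring|]. apply contR_scal; auto. Qed.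

Lemma contR_minus X f g x : contR X f x -> contR X g x -> contR X (fun y => f y - g y) x.
Proof. intros; apply (contR_ext X (fun y => f y + - g y)); [intros; ring|].
  apply contR_plus; auto; apply contR_opp; auto. Qed.

Lemma contR_sq X f x : contR X f x -> contR X (fun y => f y * f y) x.
Proof. intros H; apply (contR_comp1 X f x (fun t => t * t)); auto; apply cpt_sq. Qed.

Lemma contR_mult X f g x : contR X f x -> contR X g x -> contR X (fun y => f y * g y) x.
Proof.
  intros Hf Hg.
  apply (contR_ext X (fun y => /4 * ((f y + g y) * (f y + g y) - (f y - g y) * (f y - g y))));
    [intros; field|].
  apply contR_scal, contR_minus; apply contR_sq; [apply contR_plus|apply contR_minus]; auto.
Qed.

Lemma contR_inv X f x : contR X f x -> f x <> 0 -> contR X (fun y => / f y) x.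
Proof. intros H Hn; apply (contR_comp1 X f x (fun t => / t)); auto; apply cpt_inv; auto. Qed.

Lemma contR_sqrt X f x : contR X f x -> 0 <= f x -> contR X (fun y => sqrt (f y)) x.
Proof. intros H Hn; apply (contR_comp1 X f x sqrt); auto; apply continuity_pt_sqrt; auto. Qed.

Lemma contR_cont (X Y : NS) (h : X -> Y) f x : cont X Y h x -> contR Y f (h x) -> contR X (fun y => f (h y)) x.
Proof.
  intros Hh Hf e He. destruct (Hf e He) as [d1 [Hd1 K1]]. destruct (Hh d1 Hd1) as [d2 [Hd2 K2]].
  exists d2; split; auto.
Qed.

Definition c1 (u : R3) : R := fst (fst u).
Definition c2 (u : R3) : R := snd (fst u).
Definition c3 (u : R3) : R := snd u.
Definition rw1 (A : Mat3) : R3 := fst (fst A).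
Definition rw2 (A : Mat3) : R3 := snd (fst A).
Definition rw3 (A : Mat3) : R3 := snd A.

Lemma sq_abs x : x * x = Rabs x * Rabs x.
Proof. unfold Rabs; destruct (Rcase_abs x); ring. Qed.

Lemma norm3_le_sum u : norm3 u <= Rabs (c1 u) + Rabs (c2 u) + Rabs (c3 u).
Proof.
  d3 u; unfold norm3, c1, c2, c3; simpl. apply sqrt_le_sq.
  - pose proof (Rabs_pos a); pose proof (Rabs_pos b); pose proof (Rabs_pos c); lra.
  - rewrite (sq_abs a), (sq_abs b), (sq_abs c).
    pose proof (Rabs_pos a); pose proof (Rabs_pos b); pose proof (Rabs_pos c); nra.
Qed.

Lemma coord_le_norm u : Rabs (c1 u) <= norm3 u /\ Rabs (c2 u) <= norm3 u /\ Rabs (c3 u) <= norm3 u.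
Proof.
  d3 u; unfold norm3, c1, c2, c3; simpl.
  repeat split; rewrite <- sqrt_Rsqr_abs; apply sqrt_le_1_alt; unfold Rsqr; nra.
Qed.

Lemma coord_sub u v : c1 (sub3 u v) = c1 u - c1 v /\ c2 (sub3 u v) = c2 u - c2 v /\ c3 (sub3 u v) = c3 u - c3 v.
Proof. d3 u; d3 v; unfold c1, c2, c3; simpl; repeat split; ring. Qed.

Lemma dist3_le_sum u v : dist3 u v <= Rabs (c1 u - c1 v) + Rabs (c2 u - c2 v) + Rabs (c3 u - c3 v).
Proof. unfold dist3. destruct (coord_sub u v) as [E1 [E2 E3]]. rewrite <- E1, <- E2, <- E3. apply norm3_le_sum. Qed.

Lemma coord_le_dist u v : Rabs (c1 u - c1 v) <= dist3 u v /\ Rabs (c2 u - c2 v) <= dist3 u v /\ Rabs (c3 u - c3 v) <= dist3 u v.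
Proof. unfold dist3. destruct (coord_sub u v) as [E1 [E2 E3]]. rewrite <- E1, <- E2, <- E3. apply coord_le_norm. Qed.

Definition contV (X : NS) (f : X -> R3) (x : X) : Prop :=
  forall e, e > 0 -> exists d, d > 0 /\ forall y, nr x y d -> dist3 (f x) (f y) < e.

Lemma contV_coords (X : NS) (f : X -> R3) x : contR X (fun y => c1 (f y)) x -> contR X (fun y => c2 (f y)) x ->
  contR X (fun y => c3 (f y)) x -> contV X f x.
Proof.
  intros H1 H2 H3 e He.
  destruct (H1 (e/3)) as [d1 [Hd1 K1]]; [lra|].
  destruct (H2 (e/3)) as [d2 [Hd2 K2]]; [lra|].
  destruct (H3 (e/3)) as [d3 [Hd3 K3]]; [lra|].
  exists (Rmin d1 (Rmin d2 d3)); split; [repeat apply Rmin_glb_lt; auto|]. intros y Hy.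
  specialize (K1 y (nr_mono _ _ _ _ _ Hy (Rmin_l _ _))).
  specialize (K2 y (nr_mono _ _ _ _ _ Hy (Rle_trans _ _ _ (Rmin_r _ _) (Rmin_l _ _)))).
  specialize (K3 y (nr_mono _ _ _ _ _ Hy (Rle_trans _ _ _ (Rmin_r _ _) (Rmin_r _ _)))).
  rewrite dist3_sym. eapply Rle_lt_trans; [apply dist3_le_sum|]. lra.
Qed.

Lemma contV_coord (X : NS) (f : X -> R3) x : contV X f x ->
  contR X (fun y => c1 (f y)) x /\ contR X (fun y => c2 (f y)) x /\ contR X (fun y => c3 (f y)) x.
Proof.
  intros H. repeat split; intros e He; destruct (H e He) as [d [Hd K]]; exists d; split; auto;
  intros y Hy; specialize (K y Hy); rewrite dist3_sym in K; destruct (coord_le_dist (f y) (f x)) as [A1 [A2 A3]]; lra.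
Qed.

Lemma cont_mat (X : NS) (M : X -> Mat3) x : contV X (fun y => rw1 (M y)) x -> contV X (fun y => rw2 (M y)) x ->
  contV X (fun y => rw3 (M y)) x -> cont X MatNS M x.
Proof.
  intros H1 H2 H3 e He.
  destruct (H1 (e/3)) as [d1 [Hd1 K1]]; [lra|].
  destruct (H2 (e/3)) as [d2 [Hd2 K2]]; [lra|].
  destruct (H3 (e/3)) as [d3 [Hd3 K3]]; [lra|].
  exists (Rmin d1 (Rmin d2 d3)); split; [repeat apply Rmin_glb_lt; auto|]. intros y Hy.
  specialize (K1 y (nr_mono _ _ _ _ _ Hy (Rmin_l _ _))).
  specialize (K2 y (nr_mono _ _ _ _ _ Hy (Rle_trans _ _ _ (Rmin_r _ _) (Rmin_l _ _)))).
  specialize (K3 y (nr_mono _ _ _ _ _ Hy (Rle_trans _ _ _ (Rmin_r _ _) (Rmin_r _ _)))).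
  simpl. rewrite mdist_Dv. eapply Rle_lt_trans; [apply norm3_le_sum|].
  unfold rw1, rw2, rw3 in *. destruct (M x) as [[a1 a2] a3]. destruct (M y) as [[b1 b2] b3].
  unfold c1, c2, c3; simpl in *. rewrite !Rabs_pos_eq by apply dist3_ge0. lra.
Qed.

Lemma contV_rows (A : MatNS) : contV MatNS rw1 A /\ contV MatNS rw2 A /\ contV MatNS rw3 A.
Proof.
  assert (K: forall B, dist3 (rw1 A) (rw1 B) <= mdist A B /\ dist3 (rw2 A) (rw2 B) <= mdist A B /\
     dist3 (rw3 A) (rw3 B) <= mdist A B).
  { intros B. rewrite mdist_Dv. pose proof (coord_le_norm (Dv A B)) as C.
    destruct A as [[a1 a2] a3]; destruct B as [[b1 b2] b3]; unfold c1, c2, c3, rw1, rw2, rw3 in *; simpl in *.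
    rewrite !Rabs_pos_eq in C by apply dist3_ge0. auto. }
  repeat split; intros e He; exists e; split; auto; intros B HB; simpl in HB; destruct (K B) as [K1 [K2 K3]]; lra.
Qed.

Lemma cont_conf (X : NS) n (f : X -> Conf n) x : (forall i, contV X (fun y => f y i) x) -> cont X (ConfNS n) f x.
Proof.
  intros H e He.
  destruct (fin_min n (fun i d => forall y, nr x y d -> dist3 (f x i) (f y i) < e)) as [d [Hd K]].
  - intros i d d' Hp Hd' y Hy. apply Hp. eapply nr_mono; eauto; lra.
  - intros i. destruct (H i e He) as [d [Hd K]]. exists d; split; auto.
  - exists d; split; auto. intros y Hy i. apply K; auto.
Qed.

Lemma contV_conf n (x : ConfNS n) i : contV (ConfNS n) (fun y => y i) x.
Proof. intros e He; exists e; split; auto. Qed.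

Lemma contV_ext (X : NS) (f g : X -> R3) x : (forall y, f y = g y) -> contV X f x -> contV X g x.
Proof. intros E H e He. destruct (H e He) as [d [Hd K]]. exists d; split; auto.
  intros y Hy; rewrite <- !E; auto. Qed.

Lemma cont_ext (X Y : NS) (f g : X -> Y) x : (forall y, f y = g y) -> cont X Y f x -> cont X Y g x.
Proof. intros E H e He. destruct (H e He) as [d [Hd K]]. exists d; split; auto.
  intros y Hy; rewrite <- !E; auto. Qed.

Lemma contV_mk (X : NS) (a b c : X -> R) x : contR X a x -> contR X b x -> contR X c x ->
  contV X (fun y => (a y, b y, c y)) x.
Proof. intros; apply contV_coords; auto. Qed.

Ltac getc H := let A := fresh "A" in let B := fresh "B" in let C := fresh "C" in
  destruct (contV_coord _ _ _ H) as [A [B C]].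

Lemma contV_add (X : NS) (f g : X -> R3) x : contV X f x -> contV X g x -> contV X (fun y => add3 (f y) (g y)) x.
Proof.
  intros Hf Hg. getc Hf. getc Hg.
  apply (contV_ext X (fun y => (c1 (f y) + c1 (g y), c2 (f y) + c2 (g y), c3 (f y) + c3 (g y)))).
  { intros y; unfold c1, c2, c3; destruct (f y) as [[? ?] ?]; destruct (g y) as [[? ?] ?]; reflexivity. }
  apply contV_mk; apply contR_plus; auto.
Qed.

Lemma contV_scal (X : NS) (k : X -> R) (f : X -> R3) x : contR X k x -> contV X f x -> contV X (fun y => scal3 (k y) (f y)) x.
Proof.
  intros Hk Hf. getc Hf.
  apply (contV_ext X (fun y => (k y * c1 (f y), k y * c2 (f y), k y * c3 (f y)))).
  { intros y; unfold c1, c2, c3; destruct (f y) as [[? ?] ?]; reflexivity. }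
  apply contV_mk; apply contR_mult; auto.
Qed.

Lemma contV_sub (X : NS) (f g : X -> R3) x : contV X f x -> contV X g x -> contV X (fun y => sub3 (f y) (g y)) x.
Proof. intros; unfold sub3. apply contV_add; auto. apply (contV_scal X (fun _ => -1)); auto. apply contR_const. Qed.

Lemma contV_cross (X : NS) (f g : X -> R3) x : contV X f x -> contV X g x -> contV X (fun y => cross3 (f y) (g y)) x.
Proof.
  intros Hf Hg. getc Hf. getc Hg.
  apply (contV_ext X (fun y => (c2 (f y) * c3 (g y) - c3 (f y) * c2 (g y),
     c3 (f y) * c1 (g y) - c1 (f y) * c3 (g y), c1 (f y) * c2 (g y) - c2 (f y) * c1 (g y)))).
  { intros y; unfold c1, c2, c3; destruct (f y) as [[? ?] ?]; destruct (g y) as [[? ?] ?]; reflexivity. }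
  apply contV_mk; apply contR_minus; apply contR_mult; auto.
Qed.

Lemma contR_dot (X : NS) (f g : X -> R3) x : contV X f x -> contV X g x -> contR X (fun y => dot3 (f y) (g y)) x.
Proof.
  intros Hf Hg. getc Hf. getc Hg.
  apply (contR_ext X (fun y => c1 (f y) * c1 (g y) + c2 (f y) * c2 (g y) + c3 (f y) * c3 (g y))).
  { intros y; unfold c1, c2, c3; destruct (f y) as [[? ?] ?]; destruct (g y) as [[? ?] ?]; reflexivity. }
  repeat apply contR_plus; apply contR_mult; auto.
Qed.

Lemma contR_norm (X : NS) (f : X -> R3) x : contV X f x -> contR X (fun y => norm3 (f y)) x.
Proof. intros H; unfold norm3. apply contR_sqrt; [apply contR_dot; auto| apply dot3_ge0]. Qed.

Lemma contV_normalize (X : NS) (f : X -> R3) x : contV X f x -> norm3 (f x) <> 0 ->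
  contV X (fun y => normalize (f y)) x.
Proof. intros H Hn; unfold normalize. apply contV_scal; auto. apply contR_inv; auto. apply contR_norm; auto. Qed.

Lemma contV_matvec (X : NS) (M : X -> Mat3) (f : X -> R3) x : cont X MatNS M x -> contV X f x ->
  contV X (fun y => mat_vec (M y) (f y)) x.
Proof.
  intros HM Hf. destruct (contV_rows (M x)) as [R1 [R2 R3]].
  assert (Q: forall r, contV MatNS r (M x) -> contV X (fun y => r (M y)) x).
  { intros r Hr e He. destruct (Hr e He) as [d1 [Hd1 K1]]. destruct (HM d1 Hd1) as [d2 [Hd2 K2]].
    exists d2; split; auto. }
  apply (contV_ext X (fun y => (dot3 (rw1 (M y)) (f y), dot3 (rw2 (M y)) (f y), dot3 (rw3 (M y)) (f y)))).
  { intros y; unfold rw1, rw2, rw3; destruct (M y) as [[? ?] ?]; reflexivity. }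
  apply contV_mk; apply contR_dot; auto.
Qed.

Lemma contV_cont (X Y : NS) (h : X -> Y) (f : Y -> R3) x : cont X Y h x -> contV Y f (h x) ->
  contV X (fun y => f (h y)) x.
Proof.
  intros Hh Hf e He. destruct (Hf e He) as [d1 [Hd1 K1]]. destruct (Hh d1 Hd1) as [d2 [Hd2 K2]].
  exists d2; split; auto.
Qed.

Lemma cont_transp (A : MatNS) : cont MatNS MatNS transp A.
Proof.
  destruct (contV_rows A) as [R1 [R2 R3]]. getc R1. getc R2. getc R3.
  apply cont_mat.
  - apply (contV_ext MatNS (fun M0 : Mat3 => (c1 (rw1 M0), c1 (rw2 M0), c1 (rw3 M0)))).
    { intros M0; destruct M0 as [[[[? ?] ?] [[? ?] ?]] [[? ?] ?]]; reflexivity. }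
    apply contV_mk; auto.
  - apply (contV_ext MatNS (fun M0 : Mat3 => (c2 (rw1 M0), c2 (rw2 M0), c2 (rw3 M0)))).
    { intros M0; destruct M0 as [[[[? ?] ?] [[? ?] ?]] [[? ?] ?]]; reflexivity. }
    apply contV_mk; auto.
  - apply (contV_ext MatNS (fun M0 : Mat3 => (c3 (rw1 M0), c3 (rw2 M0), c3 (rw3 M0)))).
    { intros M0; destruct M0 as [[[[? ?] ?] [[? ?] ?]] [[? ?] ?]]; reflexivity. }
    apply contV_mk; auto.
Qed.

Lemma cont_matmul (X : NS) (M N : X -> Mat3) x : cont X MatNS M x -> cont X MatNS N x ->
  cont X MatNS (fun y => mat_mul (M y) (N y)) x.
Proof.
  intros HM HN. destruct (contV_rows (M x)) as [R1 [R2 R3]].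
  assert (HT : cont X MatNS (fun y => transp (N y)) x) by (apply (cont_comp X MatNS MatNS); auto; apply cont_transp).
  apply cont_mat.
  - apply (contV_ext _ (fun y => mat_vec (transp (N y)) (rw1 (M y)))).
    { intros y; rewrite mat_mul_rows; destruct (M y) as [[? ?] ?]; reflexivity. }
    apply contV_matvec; auto. apply (contV_cont _ MatNS); auto.
  - apply (contV_ext _ (fun y => mat_vec (transp (N y)) (rw2 (M y)))).
    { intros y; rewrite mat_mul_rows; destruct (M y) as [[? ?] ?]; reflexivity. }
    apply contV_matvec; auto. apply (contV_cont _ MatNS); auto.
  - apply (contV_ext _ (fun y => mat_vec (transp (N y)) (rw3 (M y)))).
    { intros y; rewrite mat_mul_rows; destruct (M y) as [[? ?] ?]; reflexivity. }
    apply contV_matvec; auto. apply (contV_cont _ MatNS); auto.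
Qed.

Lemma cont_frame (X : NS) (a b : X -> R3) x : contV X a x -> contV X b x ->
  norm3 (a x) <> 0 -> norm3 (cross3 (a x) (b x)) <> 0 -> cont X MatNS (fun y => frame (a y) (b y)) x.
Proof.
  intros Ha Hb Na Nc.
  assert (E1 : contV X (fun y => normalize (a y)) x) by (apply contV_normalize; auto).
  assert (E3 : contV X (fun y => normalize (cross3 (a y) (b y))) x)
    by (apply (contV_normalize X (fun y => cross3 (a y) (b y))); auto; apply contV_cross; auto).
  apply cont_mat; unfold rw1, rw2, rw3, frame; simpl; auto.
  apply (contV_cross X (fun y => normalize (cross3 (a y) (b y))) (fun y => normalize (a y))); auto.
Qed.

Record Setup := mkS { sn : nat; sE : Idx sn -> Idx sn -> Prop; sc : Idx sn -> nat;
  sL : Idx sn -> Idx sn -> R; sTh : Idx sn -> Idx sn -> Idx sn -> R;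
  sHM : is_molecular_graph sn sE sc sL sTh; sv : Idx sn; sw1 : Idx sn; sw2 : Idx sn;
  sHin : in_E2 sE sv sw1 sw2; sHpi : sTh sv sw1 sw2 <> PI }.

Definition SP (S : Setup) := in_CP (sn S) (sE S) (sc S) (sL S) (sTh S).
Definition SCP (S : Setup) := CP (sn S) (sE S) (sc S) (sL S) (sTh S).
Definition Rm (S : Setup) (x : Conf (sn S)) : Mat3 :=
  frame (sub3 (x (sw1 S)) (x (sv S))) (sub3 (x (sw2 S)) (x (sv S))).
Definition Fm (S : Setup) (x : Conf (sn S)) : Mat3 := transp (Rm S x).

Lemma Rm_nondeg S x : SP S x ->
  norm3 (sub3 (x (sw1 S)) (x (sv S))) <> 0 /\
  norm3 (cross3 (sub3 (x (sw1 S)) (x (sv S))) (sub3 (x (sw2 S)) (x (sv S)))) <> 0.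
Proof.
  intros [[phi [_ [_ [_ [Hinj [_ [_ Hang]]]]]]] _].
  pose proof (sHM S) as [Hirr [Hsym [_ HTh]]]. pose proof (sHin S) as Hin. pose proof (sHpi S) as Hpi.
  pose proof Hin as [H1 [H2 _]].
  apply nondeg.
  - intro H; apply Hinj in H; rewrite H in H1; apply (Hirr _ H1).
  - intro H; apply Hinj in H; rewrite H in H2; apply (Hirr _ H2).
  - rewrite Hang; auto. apply HTh; auto.
  - rewrite Hang; auto.
Qed.

Lemma Rm_SO3 S x : SP S x -> is_SO3 (Rm S x).
Proof. intros H; destruct (Rm_nondeg S x H); apply frame_SO3; auto. Qed.

Lemma transp_mul A B : transp (mat_mul A B) = mat_mul (transp B) (transp A).
Proof. destruct A as [[r1 r2] r3]; d3 r1; d3 r2; d3 r3;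
  destruct B as [[s1 s2] s3]; d3 s1; d3 s2; d3 s3; simpl; peq; ring. Qed.

Lemma Fm_SO3 S x : SP S x -> is_SO3 (Fm S x).
Proof. intros; apply so3_transp, Rm_SO3; auto. Qed.

Lemma Rm_equiv S (g : Mat3) x : is_SO3 g -> Rm S (fun i => mat_vec g (x i)) = mat_mul (Rm S x) (transp g).
Proof. intros Hg; unfold Rm; rewrite <- !mat_vec_sub; apply frame_equiv; auto. Qed.

Lemma Fm_equiv S (g : Mat3) x : is_SO3 g -> Fm S (fun i => mat_vec g (x i)) = mat_mul g (Fm S x).
Proof. intros Hg; unfold Fm; rewrite Rm_equiv, transp_mul, transp_transp; auto. Qed.

Definition actS (S : Setup) (A : SO3) (x : SCP S) : SCP S :=
  exist _ (rot_conf A (proj1_sig x)) (rot_in_CP _ _ _ _ _ _ _ (proj2_sig A) (proj2_sig x)).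
Definition RsoS (S : Setup) (x : SCP S) : SO3 := exist _ (Rm S (proj1_sig x)) (Rm_SO3 S _ (proj2_sig x)).
Definition FsoS (S : Setup) (x : SCP S) : SO3 := exist _ (Fm S (proj1_sig x)) (Fm_SO3 S _ (proj2_sig x)).

Lemma SCP_eq S (x y : SCP S) : proj1_sig x = proj1_sig y -> x = y.
Proof. destruct x, y; simpl; intros; subst; f_equal; apply proof_irrelevance. Qed.
Lemma SO3_eq (A B : SO3) : proj1_sig A = proj1_sig B -> A = B.
Proof. destruct A, B; simpl; intros; subst; f_equal; apply proof_irrelevance. Qed.

Lemma act_mul S (A B : SO3) x :
  proj1_sig (actS S A (actS S B x)) = fun i => mat_vec (mat_mul (proj1_sig A) (proj1_sig B)) (proj1_sig x i).
Proof. simpl; unfold rot_conf; apply functional_extensionality; intros i; rewrite mat_vec_mul; auto. Qed.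

Lemma sig_eq {A : Type} (P : A -> Prop) a b (pa : P a) (pb : P b) : a = b -> exist P a pa = exist P b pb.
Proof. intros; subst; f_equal; apply proof_irrelevance. Qed.

Definition SCint (S : Setup) := Cint (sn S) (sE S) (sc S) (sL S) (sTh S).
Definition qS (S : Setup) : SCP S -> SCint S := qmap (sE S) (sc S) (sL S) (sTh S).
Definition orbS (S : Setup) : SCP S -> SCP S -> Prop := orbit (sE S) (sc S) (sL S) (sTh S).

Definition so3mul (A B : SO3) : SO3 := exist _ (mat_mul (proj1_sig A) (proj1_sig B)) (so3_mul _ _ (proj2_sig A) (proj2_sig B)).
Definition so3tr (A : SO3) : SO3 := exist _ (transp (proj1_sig A)) (so3_transp _ (proj2_sig A)).

Lemma rot_conf_mul n (A B : SO3) (x : Conf n) : rot_conf (so3mul A B) x = rot_conf A (rot_conf B x).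
Proof. unfold rot_conf; simpl; apply functional_extensionality; intros; apply mat_vec_mul. Qed.

Lemma rot_conf_trK n (A : SO3) (x : Conf n) : rot_conf (so3tr A) (rot_conf A x) = x.
Proof. unfold rot_conf; simpl; apply functional_extensionality; intros.
  rewrite <- mat_vec_mul, mat_mul_transp_l, mat_vec_I; auto. apply (proj2_sig A). Qed.

Lemma orb_q S (x y : SCP S) (A : SO3) : proj1_sig y = rot_conf A (proj1_sig x) -> qS S x = qS S y.
Proof.
  intros H. unfold qS, qmap. apply sig_eq.
  apply functional_extensionality; intros z; apply propositional_extensionality. unfold orbit. split.
  - intros [B HB]. exists (so3mul B (so3tr A)). rewrite H, rot_conf_mul, rot_conf_trK; auto.
  - intros [B HB]. exists (so3mul B A). rewrite HB, H, rot_conf_mul; auto.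
Qed.

Definition repS (S : Setup) (b : SCint S) : SCP S :=
  proj1_sig (constructive_indefinite_description _ (proj2_sig b)).
Lemma repS_spec S b : proj1_sig b = orbS S (repS S b).
Proof. unfold repS. destruct (constructive_indefinite_description _ _); simpl; auto. Qed.

Lemma q_rep S b : qS S (repS S b) = b.
Proof. destruct b as [O HO]. unfold qS, qmap. apply sig_eq. pose proof (repS_spec S (exist _ O HO)). simpl in H. auto. Qed.

Lemma rep_q S x : exists A : SO3, proj1_sig x = rot_conf A (proj1_sig (repS S (qS S x))).
Proof.
  pose proof (repS_spec S (qS S x)) as H. simpl in H.
  assert (Hx : orbS S x x). { exists (exist _ I3 I3_SO3). unfold rot_conf; simpl.
    apply functional_extensionality; intros; symmetry; apply mat_vec_I. }
  unfold orbS in *. rewrite H in Hx. exact Hx.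
Qed.

Definition NFc (S : Setup) (x : Conf (sn S)) : Conf (sn S) := fun i => mat_vec (Rm S x) (x i).

Lemma NFc_inv S (A : SO3) x : NFc S (rot_conf A x) = NFc S x.
Proof.
  unfold NFc, rot_conf. apply functional_extensionality; intros i.
  rewrite Rm_equiv by apply (proj2_sig A). rewrite mat_vec_mul, <- (mat_vec_mul (transp _)),
    mat_mul_transp_l, mat_vec_I; auto. apply (proj2_sig A).
Qed.

Definition sbS (S : Setup) (b : SCint S) : SCP S := actS S (RsoS S (repS S b)) (repS S b).

Lemma sbS_q S x : proj1_sig (sbS S (qS S x)) = NFc S (proj1_sig x).
Proof.
  destruct (rep_q S x) as [A HA]. unfold sbS. simpl. rewrite HA, NFc_inv. reflexivity.
Qed.

Definition PsiS (S : Setup) (x : SCP S) : SCint S * SO3 := (qS S x, FsoS S x).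
Definition GS (S : Setup) (p : SCint S * SO3) : SCP S := actS S (snd p) (sbS S (fst p)).

Lemma G_Psi S x : GS S (PsiS S x) = x.
Proof.
  apply SCP_eq. change (proj1_sig (GS S (PsiS S x))) with (rot_conf (FsoS S x) (proj1_sig (sbS S (qS S x)))).
  unfold rot_conf. rewrite sbS_q. unfold NFc. cbn [proj1_sig FsoS].
  apply functional_extensionality; intros i. unfold Fm. rewrite <- mat_vec_mul, mat_mul_transp_l, mat_vec_I; auto.
  apply Rm_SO3, (proj2_sig x).
Qed.

Lemma Psi_G S p : PsiS S (GS S p) = p.
Proof.
  destruct p as [b g]. unfold PsiS, GS. simpl. f_equal.
  - rewrite <- (orb_q S (sbS S b) (actS S g (sbS S b)) g) by reflexivity.
    unfold sbS. rewrite <- (orb_q S (repS S b) _ (RsoS S (repS S b))) by reflexivity. apply q_rep.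
  - apply SO3_eq. cbn [FsoS proj1_sig actS]. unfold rot_conf. rewrite Fm_equiv by apply (proj2_sig g). unfold sbS.
    cbn [FsoS proj1_sig actS RsoS]. unfold rot_conf. rewrite Fm_equiv by apply Rm_SO3, (proj2_sig (repS S b)). unfold Fm.
    rewrite mat_mul_transp_r, mat_mul_I_r; auto. apply Rm_SO3, (proj2_sig (repS S b)).
Qed.

Definition CPNS (S : Setup) : NS := SubNS (ConfNS (sn S)) (SP S).
Definition SO3NS : NS := SubNS MatNS is_SO3.

Lemma CP_iff S V : CP_open (sn S) (sE S) (sc S) (sL S) (sTh S) V <-> oo (CPNS S) V.
Proof. apply (sub_iff (ConfNS (sn S)) (SP S)). Qed.
Lemma SO3_iff V : SO3_open V <-> oo SO3NS V.
Proof. apply (sub_iff MatNS is_SO3). Qed.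

Lemma cont_actS S p : cont (ProdNS SO3NS (CPNS S)) (CPNS S) (fun p => actS S (fst p) (snd p)) p.
Proof.
  apply cont_sub_in. simpl. unfold rot_conf. apply cont_conf. intros i.
  apply (contV_matvec _ (fun q : ProdNS SO3NS (CPNS S) => proj1_sig (fst q))
                        (fun q : ProdNS SO3NS (CPNS S) => proj1_sig (snd q) i)).
  - apply (cont_comp _ SO3NS MatNS); [apply cont_fst| apply cont_proj1].
  - apply (contV_cont _ (ConfNS (sn S)) (fun q : ProdNS SO3NS (CPNS S) => proj1_sig (snd q)) (fun y => y i)).
    + apply (cont_comp _ (CPNS S) (ConfNS (sn S))); [apply cont_snd| apply cont_proj1].
    + apply contV_conf.
Qed.

Lemma cont_Rm S (x : CPNS S) : cont (CPNS S) MatNS (fun y => Rm S (proj1_sig y)) x.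
Proof.
  destruct (Rm_nondeg S _ (proj2_sig x)) as [N1 N2]. unfold Rm.
  assert (V : forall i, contV (CPNS S) (fun y : CPNS S => proj1_sig y i) x).
  { intros i. apply (contV_cont (CPNS S) (ConfNS (sn S)) (fun y : CPNS S => proj1_sig y) (fun y => y i)).
    apply cont_proj1. apply contV_conf. }
  apply (cont_frame (CPNS S) (fun y : CPNS S => sub3 (proj1_sig y (sw1 S)) (proj1_sig y (sv S)))
                              (fun y : CPNS S => sub3 (proj1_sig y (sw2 S)) (proj1_sig y (sv S)))); auto;
   apply contV_sub; auto.
Qed.

Lemma cont_Fso S x : cont (CPNS S) SO3NS (FsoS S) x.
Proof. apply cont_sub_in. simpl. unfold Fm. apply (cont_comp (CPNS S) MatNS MatNS). apply cont_Rm. apply cont_transp. Qed.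

Lemma cont_Rso S x : cont (CPNS S) SO3NS (RsoS S) x.
Proof. apply cont_sub_in. simpl. apply cont_Rm. Qed.

Lemma cont_sbq S x : cont (CPNS S) (CPNS S) (fun y => sbS S (qS S y)) x.
Proof.
  apply cont_sub_in. apply (cont_ext (CPNS S) (ConfNS (sn S)) (fun y : CPNS S => NFc S (proj1_sig y))).
  { intros y; symmetry; apply sbS_q. }
  unfold NFc. apply cont_conf. intros i.
  apply (contV_matvec (CPNS S) (fun y : CPNS S => Rm S (proj1_sig y)) (fun y : CPNS S => proj1_sig y i)).
  apply cont_Rm.
  apply (contV_cont (CPNS S) (ConfNS (sn S)) (fun y : CPNS S => proj1_sig y) (fun y => y i)).
  apply cont_proj1. apply contV_conf.
Qed.

Definition OCP (S : Setup) := CP_open (sn S) (sE S) (sc S) (sL S) (sTh S).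
Definition OCint (S : Setup) := Cint_open (sn S) (sE S) (sc S) (sL S) (sTh S).

Lemma Cint_iff S U : OCint S U <-> oo (CPNS S) (fun x => U (qS S x)).
Proof. apply (CP_iff S). Qed.

Lemma Psi_cont S : continuous (OCP S) (prod_open (OCint S) SO3_open) (PsiS S).
Proof.
  intros W HW. apply CP_iff. intros x Hx.
  destruct (HW _ Hx) as [U [V [HU [HV [Ux [Vx Box]]]]]].
  apply Cint_iff in HU. apply SO3_iff in HV.
  destruct (HU x Ux) as [e1 [He1 K1]]. destruct (HV _ Vx) as [e2 [He2 K2]].
  destruct (cont_Fso S x e2 He2) as [d2 [Hd2 Kd2]].
  exists (Rmin e1 d2); split; [apply Rmin_glb_lt; auto|]. intros y Hy.
  apply Box; [apply K1|apply K2, Kd2]; eapply nr_mono; eauto; [apply Rmin_l|apply Rmin_r].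
Qed.

Lemma G_cont S : continuous (prod_open (OCint S) SO3_open) (OCP S) (GS S).
Proof.
  intros V HV. apply CP_iff in HV. intros [b g] Hp. unfold GS in Hp; simpl in Hp.
  destruct (HV _ Hp) as [e [He K]].
  destruct (cont_actS S (g, sbS S b) e He) as [d [Hd Kd]].
  exists (fun b' => @nr (CPNS S) (sbS S b) (sbS S b') d), (fun g' => @nr SO3NS g g' d).
  repeat split.
  - apply Cint_iff. intros x Hx. destruct (nr_open _ _ _ _ Hx) as [d1 [Hd1 K1]].
    destruct (cont_sbq S x d1 Hd1) as [d2 [Hd2 K2]]. exists d2; split; auto.
  - apply SO3_iff. intros h Hh. destruct (nr_open _ _ _ _ Hh) as [d1 [Hd1 K1]]. exists d1; split; auto.
  - apply (nr_refl (CPNS S)); auto.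
  - apply (nr_refl SO3NS); auto.
  - intros b' g' Hb Hg. apply K. apply (Kd (g', sbS S b')). split; auto.
Qed.

Lemma Psi_homeo S : homeomorphism (OCP S) (prod_open (OCint S) SO3_open) (PsiS S).
Proof.
  exists (GS S). repeat split; [apply G_Psi|apply Psi_G|apply Psi_cont|apply G_cont].
Qed.

Lemma prod_open_mono {X Y : Type} (O1 O1' : Opens X) (O2 O2' : Opens Y) W :
  (forall U, O1 U -> O1' U) -> (forall V, O2 V -> O2' V) -> prod_open O1 O2 W -> prod_open O1' O2' W.
Proof.
  intros H1 H2 HW p Hp. destruct (HW p Hp) as [U [V [HU [HV R]]]]. exists U, V; repeat split; auto; apply R.
Qed.

Lemma sub_open_mono {X : Type} (O O' : Opens X) P V :
  (forall U, O U -> O' U) -> sub_open O P V -> sub_open O' P V.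
Proof. intros H [U [HU R]]. exists U; split; auto. Qed.

Lemma P1 S : continuous (prod_open SO3_open (OCP S)) (OCP S) (fun p => actS S (fst p) (snd p)).
Proof.
  apply (continuous_ext (oo (ProdNS SO3NS (CPNS S))) _ (oo (CPNS S))).
  - intros U HU. apply prod_iff in HU. revert HU. apply prod_open_mono.
    + intros V HV; apply SO3_iff; auto.
    + intros V HV; apply CP_iff; auto.
  - intros V HV; apply CP_iff; auto.
  - apply cont_continuous. apply cont_actS.
Qed.

Definition hS (S : Setup) (p : SCP S * SO3) : SCP S * SCP S := (fst p, actS S (snd p) (fst p)).
Definition kS (S : Setup) (y : {y : SCP S * SCP S | image_of (hS S) y}) : SCP S * SO3 :=
  (fst (proj1_sig y), so3mul (FsoS S (snd (proj1_sig y))) (RsoS S (fst (proj1_sig y)))).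

Lemma k_h S p : kS S (corestr (hS S) p) = p.
Proof.
  destruct p as [x g]. unfold kS, hS, corestr. cbn [proj1_sig fst snd]. f_equal. apply SO3_eq.
  cbn [proj1_sig fst snd so3mul FsoS RsoS actS].
  unfold rot_conf. rewrite Fm_equiv by apply (proj2_sig g). unfold Fm.
  rewrite mat_mul_assoc, mat_mul_transp_l, mat_mul_I_r; auto. apply Rm_SO3, (proj2_sig x).
Qed.

Lemma h_k S y : corestr (hS S) (kS S y) = y.
Proof.
  destruct y as [y [p Hp]]. subst y.
  change (kS S (exist _ (hS S p) (ex_intro _ p eq_refl))) with (kS S (corestr (hS S) p)).
  rewrite k_h. unfold corestr. apply sig_eq; auto.
Qed.

Definition PPNS (S : Setup) : NS := SubNS (ProdNS (CPNS S) (CPNS S)) (image_of (hS S)).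

Lemma P2 S : homeo_onto_image (prod_open (OCP S) SO3_open) (prod_open (OCP S) (OCP S)) (hS S).
Proof.
  exists (kS S). split; [apply k_h|]. split; [apply h_k|]. split.
  - apply (continuous_ext (oo (ProdNS (CPNS S) SO3NS)) _ (oo (PPNS S))).
    + intros U HU. apply prod_iff in HU. revert HU. apply prod_open_mono.
      * intros V HV; apply CP_iff; auto.
      * intros V HV; apply SO3_iff; auto.
    + intros V HV. apply sub_iff. revert HV. apply sub_open_mono. intros U HU.
      apply prod_iff. revert HU. apply prod_open_mono; intros W HW; apply CP_iff; auto.
    + apply cont_continuous. intros p. apply cont_sub_in. unfold hS. simpl.
      apply (cont_pair (ProdNS (CPNS S) SO3NS) (CPNS S) (CPNS S)).
      * apply cont_fst.
      * apply (cont_comp (ProdNS (CPNS S) SO3NS) (ProdNS SO3NS (CPNS S)) (CPNS S)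
                 (fun q => (snd q, fst q)) (fun q => actS S (fst q) (snd q))).
        -- apply (cont_pair (ProdNS (CPNS S) SO3NS) SO3NS (CPNS S)); [apply cont_snd|apply cont_fst].
        -- apply cont_actS.
  - apply (continuous_ext (oo (PPNS S)) _ (oo (ProdNS (CPNS S) SO3NS))).
    + intros U HU. apply sub_iff in HU. revert HU. apply sub_open_mono. intros W HW.
      apply prod_iff in HW. revert HW. apply prod_open_mono; intros V HV; apply CP_iff; auto.
    + intros V HV. apply prod_iff. revert HV. apply prod_open_mono.
      * intros W HW; apply CP_iff; auto.
      * intros W HW; apply SO3_iff; auto.
    + apply cont_continuous. intros y. unfold kS.
      assert (Hf : cont (PPNS S) (CPNS S) (fun y => fst (proj1_sig y)) y).
      { apply (cont_comp (PPNS S) (ProdNS (CPNS S) (CPNS S)) (CPNS S)); [apply cont_proj1|apply cont_fst]. }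
      assert (Hs : cont (PPNS S) (CPNS S) (fun y => snd (proj1_sig y)) y).
      { apply (cont_comp (PPNS S) (ProdNS (CPNS S) (CPNS S)) (CPNS S)); [apply cont_proj1|apply cont_snd]. }
      apply (cont_pair (PPNS S) (CPNS S) SO3NS); auto.
      apply cont_sub_in. cbn [proj1_sig so3mul FsoS RsoS].
      apply (cont_matmul (PPNS S) (fun y => Fm S (proj1_sig (snd (proj1_sig y)))) (fun y => Rm S (proj1_sig (fst (proj1_sig y))))).
      * apply (cont_comp (PPNS S) (CPNS S) MatNS (fun y => snd (proj1_sig y)) (fun x => Fm S (proj1_sig x))); auto.
        apply (cont_comp (CPNS S) MatNS MatNS); [apply cont_Rm|apply cont_transp].
      * apply (cont_comp (PPNS S) (CPNS S) MatNS (fun y => fst (proj1_sig y)) (fun x => Rm S (proj1_sig x))); auto.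
        apply cont_Rm.
Qed.

Lemma P3 S : forall b : SCint S, exists U : SCint S -> Prop, OCint S U /\ U b /\
     exists psi : {x : SCP S | U (qS S x)} -> ({b' : SCint S | U b'} * SO3),
       homeomorphism (sub_open (OCP S) (fun x => U (qS S x)))
                     (prod_open (sub_open (OCint S) U) SO3_open) psi /\
       (forall x, proj1_sig (fst (psi x)) = qS S (proj1_sig x)) /\
       (forall (g : SO3) x x', proj1_sig x' = actS S g (proj1_sig x) ->
          proj1_sig (snd (psi x')) = mat_mul (proj1_sig g) (proj1_sig (snd (psi x)))).
Proof.
  intros b. exists (fun _ => True). split; [|split; [exact I|]].
  { apply Cint_iff. intros x _. exists 1; split; [lra|]; auto. }
  exists (fun x => (exist (fun _ => True) (qS S (proj1_sig x)) I, FsoS S (proj1_sig x))).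
  split; [|split].
  - exists (fun p => exist (fun x => True) (GS S (proj1_sig (fst p), snd p)) I).
    split; [|split; [|split]].
    + intros [x []]. apply sig_eq. simpl. apply G_Psi.
    + intros [[b' []] g]. cbn [proj1_sig fst snd]. pose proof (Psi_G S (b', g)) as E. unfold PsiS in E.
      injection E as E1 E2. f_equal; [apply sig_eq; exact E1| exact E2].
    + intros W HW. exists (fun x => W (exist (fun _ => True) (qS S x) I, FsoS S x)). split.
      * apply (Psi_cont S (fun p => W (exist (fun _ => True) (fst p) I, snd p))).
        intros p Hp. destruct (HW _ Hp) as [U1 [V1 [[U0 [HU0 EU]] [HV1 [U1p [V1p Box]]]]]].
        exists U0, V1. split; [auto|]. split; [auto|]. split; [apply EU in U1p; exact U1p|].
        split; [exact V1p|]. intros a g Ha Hg. apply Box; auto. apply EU. exact Ha.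
      * intros [x []]. simpl. reflexivity.
    + intros V [U [HU EU]].
      assert (HV' : OCP S (fun x => V (exist (fun _ => True) x I))).
      { replace (fun x => V (exist (fun _ => True) x I)) with U; auto.
        apply functional_extensionality; intros x; apply propositional_extensionality.
        rewrite (EU (exist _ x I)); simpl; tauto. }
      pose proof (G_cont S _ HV') as HG.
      intros [[b' []] g] Hp. destruct (HG (b', g) Hp) as [U1 [V1 [HU1 [HV1 [U1p [V1p Box]]]]]].
      exists (fun s => U1 (proj1_sig s)), V1.
      split; [exists U1; split; auto; intros; tauto|].
      split; [auto|]. split; [exact U1p|]. split; [exact V1p|].
      intros [a []] g' Ha Hg. apply (Box a g'); auto.
  - intros x; reflexivity.
  - intros g x x' E. simpl. rewrite E. simpl. unfold rot_conf. apply Fm_equiv. apply (proj2_sig g).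
Qed.

Lemma main_S S : (forall A x, proj1_sig (actS S A x) = rot_conf A (proj1_sig x)) /\
  principal_SO3_bundle (OCP S) (OCint S) (actS S) (qS S) /\
  trivial_SO3_bundle (OCP S) (OCint S) (actS S) (qS S).
Proof.
  split; [intros; reflexivity|]. split.
  - split; [apply P1|]. split; [apply P2|]. apply P3.
  - exists (PsiS S). split; [apply Psi_homeo|]. split; [intros; reflexivity|].
    intros g x. unfold PsiS. simpl. unfold rot_conf. apply Fm_equiv, (proj2_sig g).
Qed.

Theorem mainTheorem3 (n : nat) (E : Idx n -> Idx n -> Prop) (c : Idx n -> nat)
    (L : Idx n -> Idx n -> R) (Th : Idx n -> Idx n -> Idx n -> R)
    (HM : is_molecular_graph n E c L Th)
    (Hangle : exists v w1 w2, in_E2 E v w1 w2 /\ Th v w1 w2 <> PI) :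
  exists act : SO3 -> CP n E c L Th -> CP n E c L Th,
    (forall A x, proj1_sig (act A x) = rot_conf A (proj1_sig x)) /\
    principal_SO3_bundle (CP_open n E c L Th) (Cint_open n E c L Th) act (qmap E c L Th) /\
    trivial_SO3_bundle (CP_open n E c L Th) (Cint_open n E c L Th) act (qmap E c L Th).
Proof.
  destruct Hangle as [v [w1 [w2 [Hin Hpi]]]].
  exists (actS (mkS n E c L Th HM v w1 w2 Hin Hpi)).
  exact (main_S (mkS n E c L Th HM v w1 w2 Hin Hpi)).
Qed.
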